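(* Let $(B_1;R_1),(B_2;R_2)\in\mathcal C$, let $A_0=B_1\cap B_2$, and suppose $R_1|A_0=R_2|A_0$ and $A_0\le(B_i;R_i)$ for $i=1,2$. Let $C=B_1\cup B_2$ with $R=R_1\cup R_2$, and let $d_C$ be the dimension function of $PG(C;R)$. For $X\subseteq C$ let $\eta(X)=d_1(X\cap B_1)+d_2(X\cap B_2)-d_0(X\cap A_0)$, where $d_i$ is the dimension function of $PG(B_i;R_i)$ and $d_0$ that of $PG(A_0;R_1|A_0)$, and let $\zeta(X)=\min\{\eta(Y):X\subseteq Y\subseteq C\}$. Then $d_C(X)=\zeta(X)$ for all $X\subseteq C$. Moreover, if $C'$ is any pregeometry on the set $C$ whose restrictions to $B_1$ and to $B_2$ are $PG(B_1;R_1)$ and $PG(B_2;R_2)$ respectively, then its dimension function satisfies $d_{C'}(X)\le\zeta(X)$ for all $X\subseteq C$.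
   Context: A set system is a pair $(A;R)$ where $R$ is a set of finite non-empty subsets of $A$; for $X\subseteq A$, $R[X]=\{r\in R:r\subseteq X\}$ and $\delta(X)=|X|-|R[X]|$; for $B\subseteq A$, $R|B=R[B]$. $\mathcal C$ is the class of finite set systems with $\delta(X)\ge0$ for all $X\subseteq A$. $X\le(A;R)$ means $\delta(X)\le\delta(X')$ for all $X\subseteq X'\subseteq A$. For a set system $(A;R)$ with $\delta\ge0$, $d(X)=\min\{\delta(Y):X\subseteq Y\subseteq A\}$, $\mathrm{cl}(X)=\{y:d(X\cup\{y\})=d(X)\}$, and $PG(A;R)$ is the pregeometry $(A,\mathrm{cl})$ with dimension function $d$. (Under the hypotheses, $(C;R)\in\mathcal C$.) The restriction of a pregeometry $(C,\mathrm{cl}')$ to $B\subseteq C$ has closure $X\mapsto\mathrm{cl}'(X)\cap B$. *)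

(* Defs.v *)
From HB Require Import structures.
From mathcomp Require Import all_boot all_order all_algebra.
Set Implicit Arguments. Unset Strict Implicit. Unset Printing Implicit Defensive.
Import Order.TTheory GRing.Theory Num.Theory.

Section SetSystems.
Variable T : finType.

(* R[X] = { r in R : r subset of X } ;  also used for R|B = R[B] *)
Definition Rsub (R : {set {set T}}) (X : {set T}) : {set {set T}} :=
  [set r in R | r \subset X].

Definition delta (R : {set {set T}}) (X : {set T}) : int :=
  (#|X|%:Z - #|Rsub R X|%:Z)%R.

Definition set_system (A : {set T}) (R : {set {set T}}) : Prop :=
  forall r, r \in R -> r \subset A /\ r != set0.

Definition inC (A : {set T}) (R : {set {set T}}) : Prop :=
  set_system A R /\ forall X : {set T}, X \subset A -> (0 <= delta R X)%R.

Definition selfsuff (A : {set T}) (R : {set {set T}}) (X : {set T}) : Prop :=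
  forall X' : {set T}, X \subset X' -> X' \subset A -> (delta R X <= delta R X')%R.

Definition dss (A : {set T}) (R : {set {set T}}) (X : {set T}) : int :=
  \big[Order.min/delta R A]_(Y in powerset A | X \subset Y) delta R Y.

Definition clss (A : {set T}) (R : {set {set T}}) (X : {set T}) : {set T} :=
  [set y in A | dss A R (X :|: [set y]) == dss A R X].

Definition pregeometry (C : {set T}) (cl : {set T} -> {set T}) : Prop :=
  [/\ (forall X : {set T}, X \subset C -> X \subset cl X /\ cl X \subset C),
      (forall X Y : {set T}, X \subset Y -> Y \subset C -> cl X \subset cl Y),
      (forall X : {set T}, X \subset C -> cl (cl X) = cl X) &
      (forall (X : {set T}) (a b : T), X \subset C -> a \in C -> b \in C ->
          a \in cl (X :|: [set b]) -> a \notin cl X -> b \in cl (X :|: [set a]))].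

Definition pgdim (cl : {set T} -> {set T}) (X : {set T}) : nat :=
  \big[minn/#|X|]_(Y in powerset X | X \subset cl Y) #|Y|.

Definition restricts_to (cl : {set T} -> {set T}) (B : {set T})
    (cl0 : {set T} -> {set T}) : Prop :=
  forall X : {set T}, X \subset B -> cl X :&: B = cl0 X.

End SetSystems.

(* Main.v *)
Require Import Defs.
From HB Require Import structures.
From mathcomp Require Import all_boot all_order all_algebra.
From mathcomp Require Import zify.
Import Order.TTheory GRing.Theory Num.Theory.
Set Implicit Arguments. Unset Strict Implicit. Unset Printing Implicit Defensive.

Section Aux.
Variable T : finType.
Implicit Types (A X Y Z W S : {set T}) (R : {set {set T}}).
Local Open Scope ring_scope.

Lemma bigmin_ex (I : finType) (P : pred I) (F : I -> int) j :
  P j -> exists2 i, P i & \big[Order.min/F j]_(i | P i) F i = F i.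
Proof.
move=> Pj; apply: (big_ind (fun v => exists2 i, P i & v = F i)).
- by exists j.
- move=> a b [i Pi ->] [k Pk ->].
  have [h|h] := leP (F i) (F k); [exists i => //; rewrite min_l // | exists k => //; rewrite min_r // ltW].
- by move=> i Pi; exists i.
Qed.

Lemma dss_le A R X (Y : {set T}) : X \subset Y -> Y \subset A -> dss A R X <= delta R Y.
Proof. by move=> XY YA; apply: bigmin_le_cond; rewrite powersetE YA XY. Qed.

Lemma dss_ex A R X : X \subset A ->
  exists2 Y : {set T}, (X \subset Y) && (Y \subset A) & dss A R X = delta R Y.
Proof.
move=> XA; rewrite /dss.
have PA : (A \in powerset A) && (X \subset A) by rewrite powersetE subxx XA.
have [Y] := @bigmin_ex _ (fun Y : {set T} => (Y \in powerset A) && (X \subset Y)) (delta R) A PA.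
by rewrite powersetE => /andP[YA XY] ->; exists Y; rewrite ?XY ?YA.
Qed.

Lemma delta_sub R X Y :
  delta R (X :|: Y) + delta R (X :&: Y) <= delta R X + delta R Y.
Proof.
rewrite /delta.
have h1 := cardsUI X Y.
have h2 : (#|Rsub R X| + #|Rsub R Y| <= #|Rsub R (X:|:Y)| + #|Rsub R (X:&:Y)|)%N.
  rewrite -cardsUI; apply: leq_add; apply: subset_leq_card; apply/subsetP => r;
  rewrite !inE.
  - by case/orP=> /andP[-> h] /=; apply: subset_trans h _; rewrite ?subsetUl ?subsetUr.
  - by case/andP=> /andP[-> h] /andP[_ h']; rewrite subsetI h h'.
lia.
Qed.

Lemma dss_mono A R X X' : X \subset X' -> X' \subset A -> dss A R X <= dss A R X'.
Proof.
move=> XX' X'A; have [W /andP[X'W WA] ->] := dss_ex R X'A.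
by apply: dss_le WA; apply: subset_trans X'W.
Qed.

Lemma dss_submod A R X X' : X \subset A -> X' \subset A ->
  dss A R (X :|: X') + dss A R (X :&: X') <= dss A R X + dss A R X'.
Proof.
move=> XA X'A.
have [W /andP[XW WA] ->] := dss_ex R XA.
have [W' /andP[XW' WA'] ->] := dss_ex R X'A.
apply: le_trans (delta_sub R W W'); apply: lerD.
  by apply: dss_le; [exact: setUSS | rewrite subUset WA WA'].
apply: dss_le; first exact: setISS.
by apply: subset_trans (subsetIl _ _) WA.
Qed.

Lemma dss_ge0 A R X : inC A R -> X \subset A -> 0 <= dss A R X.
Proof.
move=> [_ H] XA; have [W /andP[_ WA] ->] := dss_ex R XA; exact: H.
Qed.


Lemma dss_extend A R S0 Z : S0 \subset Z -> Z \subset A ->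
  exists S : {set T}, [/\ S0 \subset S, S \subset Z,
    #|S|%:Z + dss A R S0 <= #|S0|%:Z + dss A R Z & dss A R S = dss A R Z].
Proof.
have [n] := ubnP #|Z|; elim: n Z => // n IH Z ltZn S0Z ZA.
have [->|neq] := eqVneq Z S0; first by exists S0; split.
have : S0 \proper Z by rewrite properEneq eq_sym neq S0Z.
case/properP => _ [z zZ zS0].
have cZ := cardsD1 z Z; rewrite zZ /= in cZ.
have S0Z' : S0 \subset Z :\ z by rewrite subsetD1 S0Z zS0.
have Z'A : Z :\ z \subset A by apply: subset_trans (subD1set Z z) ZA.
have [|S' [S0S' S'Z' ineq eqd]] := IH (Z :\ z) _ S0Z' Z'A; first by move: ltZn; rewrite cZ; lia.
have mono := dss_mono R (subD1set Z z) ZA.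
have [le|lt] := leP (dss A R Z) (dss A R (Z :\ z)).
  exists S'; split => //; first by apply: subset_trans S'Z' (subD1set Z z).
    by apply: le_trans ineq _; rewrite lerD2l.
  by rewrite eqd; apply: le_anti; rewrite le mono.
have S'Z : S' \subset Z by apply: subset_trans S'Z' (subD1set Z z).
have zS' : z \notin S' by apply/negP => /(subsetP S'Z'); rewrite !inE eqxx.
exists (z |: S'); split.
- by apply: subset_trans S0S' (subsetU1 _ _).
- by rewrite subUset sub1set zZ.
- rewrite cardsU1 zS' /=.
  move: ineq lt; lia.
- have zSZ : z |: S' \subset Z by rewrite subUset sub1set zZ.
  apply: le_anti; rewrite dss_mono //=.
  have e1 : (z |: S') :|: (Z :\ z) = Z.
    apply/setP => y; rewrite !inE; have := subsetP S'Z y.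
    case: (eqVneq y z) => [->|yz] /=; first by rewrite zZ.
    by case: (y \in S') => //= ->.
  have e2 : (z |: S') :&: (Z :\ z) = S'.
    apply/setP => y; rewrite !inE; have := subsetP S'Z' y; rewrite !inE.
    case: (eqVneq y z) => [->|yz] /=; first by rewrite (negbTE zS').
    by case: (y \in S') => // /(_ isT) ->.
  have := dss_submod R (subset_trans zSZ ZA) Z'A.
  rewrite e1 e2 eqd; lia.
Qed.

Lemma dss_cl A R S Z : S \subset Z -> Z \subset A -> dss A R S = dss A R Z ->
  Z \subset clss A R S.
Proof.
move=> SZ ZA e; apply/subsetP => z zZ; rewrite inE (subsetP ZA z zZ) /=.
have h : S :|: [set z] \subset Z by rewrite subUset SZ sub1set zZ.
have hA := subset_trans h ZA.
apply/eqP; apply: le_anti; rewrite (dss_mono R (subsetUl S [set z]) hA) andbT.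
by rewrite e dss_mono.
Qed.

End Aux.

Section Pgeo.
Variable T : finType.
Implicit Types (X Y Z W S C : {set T}).

Lemma pgdim_span (cl : {set T} -> {set T}) X S : S \subset X -> X \subset cl S ->
  (pgdim cl X <= #|S|)%N.
Proof.
move=> SX XS; rewrite /pgdim.
have := mem_index_enum S; rewrite unlock; elim: (index_enum _) => //= i l ih.
rewrite inE => /orP [/eqP<-|/ih h].
  by rewrite powersetE SX XS /= geq_minl.
case: ifP => _ //; exact: leq_trans (geq_minr _ _) h.
Qed.

Lemma pgdim_le C (cl : {set T} -> {set T}) X S : pregeometry C cl ->
  X \subset C -> S \subset C -> X \subset cl S -> (pgdim cl X <= #|S|)%N.
Proof.
move=> [ext mono idem exch] XC.
have [n] := ubnP #|S :\: X|; elim: n S => // n IH S ltSn SC XclS.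
have [SX|] := boolP (S \subset X); first exact: pgdim_span.
case/subsetPn => s sS sX.
have SmC : S :\ s \subset C by apply: subset_trans (subD1set S s) SC.
have eS : S = (S :\ s) :|: [set s] by rewrite setUC setD1K.
have [XSm|] := boolP (X \subset cl (S :\ s)).
  have h : (#|(S :\ s) :\: X| < n)%N.
    have -> : (S :\ s) :\: X = (S :\: X) :\ s.
      by apply/setP => y; rewrite !inE; case: (y \in X); rewrite ?andbF.
    rewrite ltnS in ltSn; apply: leq_trans _ ltSn; apply: proper_card; apply: properD1; by rewrite inE sX.
  apply: leq_trans (IH _ h SmC XSm) _; exact: subset_leq_card (subD1set S s).
case/subsetPn => x xX xSm.
have xC := subsetP XC x xX; have sC := subsetP SC s sS.
have xS : x \in cl ((S :\ s) :|: [set s]) by rewrite -eS; exact: subsetP XclS x xX.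
have sx := exch _ _ _ SmC xC sC xS xSm.
set S' := (S :\ s) :|: [set x].
have S'C : S' \subset C by rewrite subUset SmC sub1set xC.
have SS' : S \subset cl S'.
  apply/subsetP => y yS; have [->//|ys] := eqVneq y s.
  apply: (subsetP (proj1 (ext _ S'C))); by rewrite !inE ys yS.
have XS' : X \subset cl S'.
  apply: subset_trans XclS _; rewrite -(idem _ S'C); apply: mono => //.
  exact: (proj2 (ext _ S'C)).
have cS' : (#|S'| <= #|S|)%N.
  rewrite /S' setUC cardsU1 [X in (_ <= X)%N](cardsD1 s) sS; by case: (x \in S :\ s).
have h : (#|S' :\: X| < n)%N.
  have -> : S' :\: X = (S :\: X) :\ s.
    by apply/setP => y; rewrite !inE; case: (eqVneq y x) => [->|]; rewrite ?xX ?andbF //= orbF andbCA.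
  rewrite ltnS in ltSn; apply: leq_trans _ ltSn; apply: proper_card; apply: properD1; by rewrite inE sX.
exact: leq_trans (IH S' h S'C XS') cS'.
Qed.

End Pgeo.

Section Main.
Variable T : finType.
Implicit Types (A X Y Z W S B : {set T}).
Local Open Scope ring_scope.

Lemma Rsub_Rsub (R : {set {set T}}) A W : W \subset A -> Rsub (Rsub R A) W = Rsub R W.
Proof.
move=> WA; apply/setP => r; rewrite !inE.
by case rW: (r \subset W); rewrite ?andbF //= (subset_trans rW WA) andbT.
Qed.

Lemma d_restrict B R (A0 : {set T}) : inC B R -> A0 \subset B -> selfsuff B R A0 ->
  forall Z, Z \subset A0 -> dss B R Z = dss A0 (Rsub R A0) Z.
Proof.
move=> HC A0B ss Z ZA.
have eD W : W \subset A0 -> delta (Rsub R A0) W = delta R W.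
  by move=> WA; rewrite /delta Rsub_Rsub.
apply: le_anti; apply/andP; split.
  have [W /andP[ZW WA] ->] := dss_ex (Rsub R A0) ZA.
  by rewrite eD //; apply: dss_le ZW (subset_trans WA A0B).
have [W /andP[ZW WB] ->] := dss_ex R (subset_trans ZA A0B).
have h1 := delta_sub R W A0.
have h2 : delta R A0 <= delta R (W :|: A0) by apply: ss; rewrite ?subsetUr ?subUset ?WB.
have h3 : dss A0 (Rsub R A0) Z <= delta (Rsub R A0) (W :&: A0).
  by apply: dss_le; rewrite ?subsetIr // subsetI ZW ZA.
rewrite eD ?subsetIr // in h3.
lia.
Qed.

Variables (B1 B2 : {set T}) (R1 R2 : {set {set T}}).
Hypotheses (H1 : inC B1 R1) (H2 : inC B2 R2)
  (HR : Rsub R1 (B1 :&: B2) = Rsub R2 (B1 :&: B2))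
  (SS1 : selfsuff B1 R1 (B1 :&: B2)) (SS2 : selfsuff B2 R2 (B1 :&: B2)).

Local Notation A0 := (B1 :&: B2).
Local Notation C := (B1 :|: B2).
Local Notation R := (R1 :|: R2).
Local Notation R0 := (Rsub R1 A0).

Lemma delta01 W : W \subset A0 -> delta R0 W = delta R1 W.
Proof. by move=> WA; rewrite /delta Rsub_Rsub. Qed.

Lemma delta02 W : W \subset A0 -> delta R0 W = delta R2 W.
Proof. by move=> WA; rewrite /delta HR Rsub_Rsub. Qed.

Lemma deltaD Y : Y \subset C ->
  delta R Y = delta R1 (Y :&: B1) + delta R2 (Y :&: B2) - delta R0 (Y :&: A0).
Proof.
move=> YC.
have c1 : #|Y| = (#|Y :&: B1| + #|Y :&: B2| - #|Y :&: A0|)%N.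
  rewrite -cardsUI.
  have -> : (Y :&: B1) :|: (Y :&: B2) = Y by rewrite -setIUr; apply/setIidPl.
  have -> : (Y :&: B1) :&: (Y :&: B2) = Y :&: A0 by rewrite setIACA setIid.
  by rewrite addnK.
have sys1 := proj1 H1; have sys2 := proj1 H2.
have e1 : Rsub R Y = Rsub R1 (Y :&: B1) :|: Rsub R2 (Y :&: B2).
  apply/setP => r; rewrite !inE !subsetI.
  case r1: (r \in R1); first by rewrite (proj1 (sys1 r r1)) /=; case: (r \subset Y); rewrite /= ?andbF ?andbT.
  case r2: (r \in R2) => //=; by rewrite (proj1 (sys2 r r2)) !andbT.
have e2 : Rsub R1 (Y :&: B1) :&: Rsub R2 (Y :&: B2) = Rsub R0 (Y :&: A0).
  apply/setP => r; rewrite !inE !subsetI.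
  have := congr1 (fun s : {set {set T}} => r \in s) HR; rewrite /= !inE subsetI => hr.
  move: hr; case: (r \in R1); case: (r \in R2); case: (r \subset Y);
  case: (r \subset B1); case: (r \subset B2) => //.
have c2 : #|Rsub R Y| = (#|Rsub R1 (Y :&: B1)| + #|Rsub R2 (Y :&: B2)| - #|Rsub R0 (Y :&: A0)|)%N.
  by rewrite e1 -e2 -cardsUI addnK.
rewrite /delta c1 c2.
have l1 : (#|Y :&: A0| <= #|Y :&: B1|)%N by apply: subset_leq_card; rewrite setIS // subsetIl.
have l2 : (#|Rsub R0 (Y :&: A0)| <= #|Rsub R1 (Y :&: B1)|)%N.
  by rewrite -e2; apply: subset_leq_card; apply: subsetIl.
lia.
Qed.


Lemma deltaB1 W : W \subset B1 -> delta R W = delta R1 W.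
Proof.
move=> WB; rewrite deltaD; last by apply: subset_trans WB (subsetUl _ _).
have e : W :&: B2 = W :&: A0 by rewrite setIA (setIidPl WB).
rewrite (setIidPl WB) e -delta02 ?subsetIr //; lia.
Qed.

Lemma deltaB2 W : W \subset B2 -> delta R W = delta R2 W.
Proof.
move=> WB; rewrite deltaD; last by apply: subset_trans WB (subsetUr _ _).
have e : W :&: A0 = W :&: B1 by rewrite (setIC B1 B2) setIA (setIidPl WB).
rewrite (setIidPl WB) e -delta01; first lia.
by rewrite subsetI subsetIr (subset_trans (subsetIl _ _) WB).
Qed.

Lemma deltaA0 W : W \subset A0 -> delta R W = delta R0 W.
Proof.
move=> WA; rewrite deltaB1 ?delta01 //; apply: subset_trans WA (subsetIl _ _).
Qed.

Definition eta X := dss B1 R1 (X :&: B1) + dss B2 R2 (X :&: B2) - dss A0 R0 (X :&: A0).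
Definition zeta X := \big[Order.min/eta C]_(Y in powerset C | X \subset Y) eta Y.

Lemma eta_zeta X Y : X \subset Y -> Y \subset C -> zeta X <= eta Y.
Proof. by move=> XY YC; apply: bigmin_le_cond; rewrite powersetE YC XY. Qed.

Lemma Ysplit Y : Y \subset C -> Y = (Y :&: B1) :|: (Y :&: B2).
Proof. by move=> YC; rewrite -setIUr; apply/esym/setIidPl. Qed.

Lemma YA0 Y : Y :&: A0 = (Y :&: B1) :&: (Y :&: B2).
Proof. by rewrite setIACA setIid. Qed.

Lemma dss_le_eta X Y : X \subset Y -> Y \subset C -> dss C R X <= eta Y.
Proof.
move=> XY YC.
have [W1 /andP[YW1 W1B] e1] := dss_ex R1 (subsetIr Y B1).
have [W2 /andP[YW2 W2B] e2] := dss_ex R2 (subsetIr Y B2).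
have WC : W1 :|: W2 \subset C by apply: setUSS.
have h1 : dss C R X <= delta R (W1 :|: W2).
  apply: dss_le WC; apply: subset_trans XY _; rewrite (Ysplit YC); exact: setUSS.
have h2 := delta_sub R W1 W2.
have WA : W1 :&: W2 \subset A0 by apply: setISS.
have h3 : dss A0 R0 (Y :&: A0) <= delta R0 (W1 :&: W2).
  by apply: dss_le WA; rewrite YA0; apply: setISS.
rewrite (deltaB1 W1B) (deltaB2 W2B) (deltaA0 WA) in h2.
rewrite /eta e1 e2; lia.
Qed.

Lemma zeta_le X Y : X \subset Y -> Y \subset C -> zeta X <= delta R Y.
Proof.
move=> XY; have [n] := ubnP (#|C| - #|Y|)%N; elim: n Y XY => // n IH Y XY ltn YC.
have step : forall Z W, Z \subset C -> Y :&: Z \subset W -> W \subset Z ->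
    delta R W < delta R (Y :&: Z) -> zeta X <= delta R Y.
  move=> Z W ZC YZW WZ lt.
  have e : Y :&: W = Y :&: Z.
    apply/eqP; rewrite eqEsubset setIS //= subsetI subsetIl YZW.
    done.
  have h := delta_sub R Y W; rewrite e in h.
  have lt' : delta R (Y :|: W) < delta R Y by move: h lt; lia.
  have Y'C : Y :|: W \subset C by rewrite subUset YC (subset_trans WZ ZC).
  have [eY|neY] := eqVneq (Y :|: W) Y; first by rewrite eY ltxx in lt'.
  have pr : Y \proper Y :|: W by rewrite properEneq eq_sym neY subsetUl.
  have c1 := proper_card pr; have c2 := subset_leq_card Y'C.
  apply: le_trans (ltW lt'); apply: IH.
  - exact: subset_trans XY (subsetUl _ _).
  - move: ltn c1 c2; lia.
  - exact: Y'C.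
have [W1 /andP[YW1 W1B] e1] := dss_ex R1 (subsetIr Y B1).
have [lt1|ge1] := ltP (delta R1 W1) (delta R1 (Y :&: B1)).
  apply: (step B1 W1) => //; first exact: subsetUl.
  by rewrite deltaB1 // deltaB1 ?subsetIr.
have [W2 /andP[YW2 W2B] e2] := dss_ex R2 (subsetIr Y B2).
have [lt2|ge2] := ltP (delta R2 W2) (delta R2 (Y :&: B2)).
  apply: (step B2 W2) => //; first exact: subsetUr.
  by rewrite deltaB2 // deltaB2 ?subsetIr.
have [W0 /andP[YW0 W0A] e0] := dss_ex R0 (subsetIr Y A0).
have [lt0|ge0] := ltP (delta R0 W0) (delta R0 (Y :&: A0)).
  apply: (step A0 W0) => //; first exact: subset_trans (subsetIl _ _) (subsetUl _ _).
  by rewrite deltaA0 // deltaA0 ?subsetIr.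
have f1 := dss_le R1 (subxx (Y :&: B1)) (subsetIr Y B1).
have f2 := dss_le R2 (subxx (Y :&: B2)) (subsetIr Y B2).
have f0 := dss_le R0 (subxx (Y :&: A0)) (subsetIr Y A0).
have := eta_zeta XY YC; rewrite /eta (deltaD YC) e1 e2 e0 -/A0.
move: f1 f2 f0 ge1 ge2 ge0; rewrite e1 e2 e0; lia.
Qed.

Lemma part1 X : X \subset C -> dss C R X = zeta X.
Proof.
move=> XC; apply: le_anti; apply/andP; split.
  apply/bigmin_geP; split; first exact: dss_le_eta.
  by move=> Y; rewrite powersetE => /andP[YC XY]; apply: dss_le_eta.
have [W /andP[XW WC] ->] := dss_ex R XC; exact: zeta_le.
Qed.


Lemma arith (p s s0 s1 s2 : nat) (g D1Y0 D1S0 D1Y1 D2S0 D2Y2 D0Y0 D0S0 : int) :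
  s0%:Z + g <= 0%N%:Z + D1Y0 ->
  s1%:Z + D1S0 <= s0%:Z + D1Y1 ->
  s2%:Z + D2S0 <= s0%:Z + D2Y2 ->
  D1S0 = D1Y0 -> D1Y0 = D0Y0 -> D1S0 = D0S0 -> D2S0 = D0S0 -> 0 <= g ->
  (s + s0 <= s1 + s2)%N -> (p <= s)%N ->
  p%:Z <= D1Y1 + D2Y2 - D0Y0.
Proof. lia. Qed.

Lemma part2 (cl' : {set T} -> {set T}) : pregeometry C cl' ->
  restricts_to cl' B1 (clss B1 R1) -> restricts_to cl' B2 (clss B2 R2) ->
  forall X, X \subset C -> (pgdim cl' X)%:Z <= zeta X.
Proof.
move=> pg rs1 rs2 X XC.
have bnd : forall Y, X \subset Y -> Y \subset C -> (pgdim cl' X)%:Z <= eta Y.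
  move=> Y XY YC.
  have A0B1 : A0 \subset B1 := subsetIl B1 B2.
  have A0B2 : A0 \subset B2 := subsetIr B1 B2.
  have d10 := d_restrict H1 A0B1 SS1.
  have d20 Z : Z \subset A0 -> dss B2 R2 Z = dss A0 R0 Z.
    by move=> ZA; rewrite (d_restrict H2 A0B2 SS2 ZA) HR.
  have Y0A : Y :&: A0 \subset A0 := subsetIr _ _.
  have Y0B1 : Y :&: A0 \subset B1 := subset_trans Y0A A0B1.
  have [S0 [_ S0Y0 c0 e0]] := dss_extend R1 (sub0set (Y :&: A0)) Y0B1.
  have g0 := dss_ge0 H1 (sub0set B1).
  rewrite cards0 in c0.
  have S0A : S0 \subset A0 := subset_trans S0Y0 Y0A.
  have S0Y1 : S0 \subset Y :&: B1 := subset_trans S0Y0 (setIS Y A0B1).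
  have S0Y2 : S0 \subset Y :&: B2 := subset_trans S0Y0 (setIS Y A0B2).
  have [S1 [S0S1 S1Y1 c1 e1]] := dss_extend R1 S0Y1 (subsetIr Y B1).
  have [S2 [S0S2 S2Y2 c2 e2]] := dss_extend R2 S0Y2 (subsetIr Y B2).
  have S1B1 : S1 \subset B1 := subset_trans S1Y1 (subsetIr _ _).
  have S2B2 : S2 \subset B2 := subset_trans S2Y2 (subsetIr _ _).
  have SC : S1 :|: S2 \subset C by apply: setUSS.
  have cS : (#|S1 :|: S2| + #|S0| <= #|S1| + #|S2|)%N.
    rewrite -(cardsUI S1 S2) leq_add2l; apply: subset_leq_card; by rewrite subsetI S0S1 S0S2.
  case: pg => [ext mono idem exch].
  have YS : Y \subset cl' (S1 :|: S2).
    rewrite (Ysplit YC) subUset; apply/andP; split.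
      have := dss_cl S1Y1 (subsetIr Y B1) e1; rewrite -rs1 // => h.
      apply: subset_trans h _; apply: subset_trans (subsetIl _ _) _.
      by apply: mono; rewrite ?subsetUl.
    have := dss_cl S2Y2 (subsetIr Y B2) e2; rewrite -rs2 // => h.
    apply: subset_trans h _; apply: subset_trans (subsetIl _ _) _.
    by apply: mono; rewrite ?subsetUr.
  have pgle := pgdim_le (And4 ext mono idem exch) XC SC (subset_trans XY YS).
  have q1 := d10 _ Y0A; have q2 := d10 _ S0A; have q3 := d20 _ S0A.
  rewrite /eta; apply: (arith c0 c1 c2 e0 q1 q2 q3 g0 cS pgle).
apply/bigmin_geP; split; first exact: bnd.
by move=> Y; rewrite powersetE => /andP[YC XY]; apply: bnd.
Qed.

End Main.

Theorem lemma6p7 (T : finType) (B1 B2 : {set T}) (R1 R2 : {set {set T}}) :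
  inC B1 R1 -> inC B2 R2 ->
  Rsub R1 (B1 :&: B2) = Rsub R2 (B1 :&: B2) ->
  selfsuff B1 R1 (B1 :&: B2) -> selfsuff B2 R2 (B1 :&: B2) ->
  let A0 := B1 :&: B2 in
  let C := B1 :|: B2 in
  let R := R1 :|: R2 in
  let eta := fun X : {set T} =>
    (dss B1 R1 (X :&: B1) + dss B2 R2 (X :&: B2)
       - dss A0 (Rsub R1 A0) (X :&: A0))%R in
  let zeta := fun X : {set T} =>
    \big[Order.min/eta C]_(Y in powerset C | X \subset Y) eta Y in
  (forall X : {set T}, X \subset C -> dss C R X = zeta X) /\
  (forall cl' : {set T} -> {set T},
     pregeometry C cl' ->
     restricts_to cl' B1 (clss B1 R1) ->
     restricts_to cl' B2 (clss B2 R2) ->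
     forall X : {set T}, X \subset C -> ((pgdim cl' X)%:Z <= zeta X)%R).
Proof.
move=> h1 h2 hR s1 s2 A0 C R eta zeta; split.
- move=> X XC; exact: (part1 h1 h2 hR XC).
- move=> cl' pg r1 r2 X XC; exact: (part2 h1 h2 hR s1 s2 pg r1 r2 XC).
Qed.
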